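(* Let $a\ge 2$ be an even integer. For every integer $n\ge 1$, the generalized Fermat number $F_n^{(a)}=a^{2^{n-1}}+1$ is primover to base $a$.
   Context: For an integer $a>1$ and an odd integer $n>1$ with $\gcd(a,n)=1$: $h_a(n)$ denotes the multiplicative order of $a$ modulo $n$. A cyclotomic coset of $a$ modulo $n$ is a set of the form $\{\, s a^j \bmod n : j\ge 0\,\}$ with $s\in\{1,\dots,n-1\}$; these cosets partition $\{1,\dots,n-1\}$, and $r_a(n)$ denotes the number of distinct cyclotomic cosets of $a$ modulo $n$. An odd composite number $n$ coprime to $a$ is called an overpseudoprime to base $a$ if $n=r_a(n)\,h_a(n)+1$. An integer $N>1$ is called primover to base $a$ if it is either prime or an overpseudoprime to base $a$. *)

(* Defs.v *)
From mathcomp Require Import all_boot.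
Set Implicit Arguments. Unset Strict Implicit. Unset Printing Implicit Defensive.

(* h_a(n): multiplicative order of a modulo n, i.e. the least k >= 1 with
   a^k = 1 (mod n).  The search is over 1 <= k < n; for gcd(a,n)=1 and n>1
   the order is <= totient n <= n-1, so this is exactly the order
   (the value 0 is returned only when no such k exists, which cannot happen
   under the coprimality hypothesis). *)
Definition mult_order (a n : nat) : nat :=
  nth 0 [seq k <- iota 1 n | a ^ k == 1 %[mod n]] 0.

(* Ranging j over 0 <= j < n is no restriction: the sequence (s a^j mod n)_j
   takes at most n values, and all of them already occur among its first n
   terms (preperiod + period <= n). *)
Definition cyc_coset (a n s : nat) : {set 'I_n} :=
  [set x : 'I_n | [exists j : 'I_n, val x == (s * a ^ j) %% n]].

Definition num_cosets (a n : nat) : nat :=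
  #|[set cyc_coset a n (val s) | s : 'I_n & 0 < val s]|.

Definition overpseudoprime (a n : nat) : bool :=
  [&& odd n, 1 < n, ~~ prime n, coprime a n &
      n == num_cosets a n * mult_order a n + 1].

Definition primover (a N : nat) : bool :=
  (1 < N) && (prime N || overpseudoprime a N).

(* Main.v *)
Require Import Defs.
From mathcomp Require Import all_boot.

Lemma powmod1 {a d k : nat} (c : nat) : a ^ k = 1 %[mod d] -> a ^ (k * c) = 1 %[mod d].
Proof. by move=> H; rewrite expnM -modnXm H modnXm exp1n. Qed.

Lemma sq_mod (a d m : nat) : 0 < a -> d %| a ^ m + 1 -> a ^ (m * 2) = 1 %[mod d].
Proof.
move=> a0 H; apply/eqP; rewrite eqn_mod_dvd ?expn_gt0 ?a0 //.
rewrite expnM -{2}(exp1n 2) subn_sqr; exact: dvdn_mull.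
Qed.

Lemma no_small (a d n k : nat) : 0 < a -> 0 < n -> odd d -> 1 < d ->
  d %| a ^ (2 ^ n.-1) + 1 -> 0 < k < 2 ^ n -> a ^ k = 1 %[mod d] -> False.
Proof.
move=> a0 n0 od d1 dN /andP[k0 kh] Hk.
have Hh : a ^ (2 ^ n) = 1 %[mod d].
  by rewrite -(prednK n0) expnSr; apply: sq_mod.
case: (egcdnP (2 ^ n) k0) => km kn E _.
have Hg : a ^ (gcdn k (2 ^ n)) = 1 %[mod d].
  have := powmod1 km Hk; rewrite mulnC E expnD [kn * _]mulnC.
  rewrite -modnMml (powmod1 _ Hh) modnMml mul1n.
  by move=> <-.
have [e le_en eg] : exists2 e, e <= n & gcdn k (2 ^ n) = 2 ^ e.
  by apply/dvdn_pfactor => //; apply: dvdn_gcdr.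
have ge : 2 ^ e <= k by rewrite -eg; apply: dvdn_leq => //; apply: dvdn_gcdl.
have len : e <= n.-1.
  rewrite -ltnS prednK //; rewrite -(ltn_exp2l _ _ (isT : 1 < 2)).
  exact: leq_ltn_trans ge kh.
have Hm : a ^ (2 ^ n.-1) = 1 %[mod d].
  have /divnK <- := dvdn_exp2l 2 len.
  by rewrite mulnC -eg; apply: powmod1.
have : d %| 2.
  have : a ^ (2 ^ n.-1) + 1 = 1 + 1 %[mod d] by rewrite -modnDml Hm modnDml.
  by move/eqP; rewrite (eqP dN) eq_sym.
move/(dvdn_leq (isT : 0 < 2)); case: d od d1 dN Hk Hh Hg Hm => [|[|[|]]] //.
Qed.

Section Main.
Variables (a n : nat).
Hypotheses (ha : 2 <= a) (heven : ~~ odd a) (hn : 1 <= n).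

Local Notation m := (2 ^ n.-1).
Local Notation h := (2 ^ n).
Local Notation N := (a ^ (2 ^ n.-1) + 1).

Lemma a_gt0 : 0 < a. Proof. exact: leq_trans ha. Qed.
Lemma N_gt0 : 0 < N. Proof. by rewrite addn1. Qed.
Lemma N_gt1 : 1 < N. Proof. by rewrite addn1 ltnS expn_gt0 a_gt0. Qed.
Lemma h_gt0 : 0 < h. Proof. by rewrite expn_gt0. Qed.
Lemma N_odd : odd N.
Proof. by rewrite addn1 /= oddX negb_or (negbTE heven) andbT -lt0n expn_gt0. Qed.
Lemma coprime_aN : coprime a N.
Proof.
rewrite -coprime_modr -(prednK (expn_gt0 2 n.-1)) expnS mulnC addn1 -addn1.
by rewrite modnMDl coprime_modr coprimen1.
Qed.
Lemma h_lt_N : h < N.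
Proof.
rewrite addn1 ltnS; apply: (@leq_trans (2 ^ m)); last by rewrite leq_exp2r ?expn_gt0.
rewrite leq_exp2l //; rewrite -{1}(prednK hn); exact: ltn_expl.
Qed.
Lemma h_le_N : h <= N. Proof. exact: ltnW h_lt_N. Qed.
Lemma aH : a ^ h = 1 %[mod N].
Proof. by rewrite -(prednK hn) expnSr; apply: sq_mod (a_gt0) _. Qed.

Lemma per s j : s * a ^ j = s * a ^ (j %% h) %[mod N].
Proof.
have H : a ^ (j %/ h * h) = 1 %[mod N] by rewrite mulnC; apply: powmod1 aH.
by rewrite {1}(divn_eq j h) expnD mulnCA -modnMml H modnMml mul1n.
Qed.

Lemma no_smallN k : 0 < k < h -> a ^ k = 1 %[mod N] -> False.
Proof. exact: (@no_small a N n k a_gt0 hn N_odd N_gt1 (dvdnn _)). Qed.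

Lemma distinct s i j : 0 < s < N -> i < j < h -> s * a ^ i %% N != s * a ^ j %% N.
Proof.
move=> /andP[s0 sN] /andP[ij jh]; apply/negP => /eqP E.
have le : s * a ^ i <= s * a ^ j by rewrite leq_mul2l leq_pexp2l ?a_gt0 ?orbT // ltnW.
move: E => /esym /eqP; rewrite eqn_mod_dvd // -(subnKC (ltnW ij)) expnD mulnA.
rewrite -[X in _ - X]muln1 -mulnBr.
set g := gcdn s N; set d := N %/ g.
have g0 : 0 < g by rewrite gcdn_gt0 s0.
have Nd : N = d * g by rewrite divnK // dvdn_gcdr.
have sg : s = s %/ g * g by rewrite divnK // dvdn_gcdl.
have cop : coprime d (s %/ g).
  rewrite /coprime -(eqn_pmul2r g0) mul1n muln_gcdl -Nd -sg.
  by rewrite /g gcdnC.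
rewrite {1}Nd {1}sg -!mulnA mulnCA [g * _]mulnC dvdn_pmul2r // Gauss_dvdr //.
have cdN : d %| N by rewrite Nd dvdn_mulr.
rewrite Gauss_dvdr; last by apply: coprimeXr; rewrite coprime_sym; apply: coprime_dvdr cdN coprime_aN.
rewrite -eqn_mod_dvd ?expn_gt0 ?a_gt0 // => /eqP Hd.
have d1 : 1 < d.
  rewrite ltnNge; apply/negP => d_le1.
  have gs : g <= s by apply: dvdn_leq => //; apply: dvdn_gcdl.
  have : N <= g by rewrite Nd -{2}(mul1n g) leq_mul.
  by move/leq_trans/(_ gs); rewrite leqNgt sN.
apply: (@no_small a d n (j - i) a_gt0 hn (dvdn_odd cdN N_odd) d1 cdN _ Hd).
by rewrite subn_gt0 ij /= (leq_ltn_trans (leq_subr _ _) jh).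
Qed.


Definition fo (s : nat) (j : 'I_h) : 'I_N := Ordinal (ltn_pmod (s * a ^ j) N_gt0).

Lemma coset_eq s : cyc_coset a N s = [set fo s j | j : 'I_h].
Proof.
apply/setP => x; rewrite inE; apply/existsP/imsetP.
- case=> j /eqP Hx; exists (Ordinal (ltn_pmod j h_gt0)) => //.
  by apply: val_inj; rewrite /= Hx per.
- case=> j _ ->; by exists (widen_ord h_le_N j).
Qed.

Lemma coset_card {s} : 0 < s < N -> #|cyc_coset a N s| = h.
Proof.
move=> Hs; rewrite coset_eq card_imset ?card_ord //.
move=> i j /(congr1 val) /= E; apply: val_inj => /=.
case: (ltngtP i j) => // lt;
  first [ by move: (@distinct s i j Hs); rewrite E lt (ltn_ord j) eqxx => /(_ isT)
        | by move: (@distinct s j i Hs); rewrite E lt (ltn_ord i) eqxx => /(_ isT) ].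
Qed.

Lemma coset_self (x : 'I_N) : x \in cyc_coset a N x.
Proof.
rewrite inE; apply/existsP; exists (Ordinal N_gt0); by rewrite /= expn0 muln1 modn_small.
Qed.

Lemma coset_nz {s} {x : 'I_N} : 0 < s < N -> x \in cyc_coset a N s -> 0 < x.
Proof.
move=> /andP[s0 sN]; rewrite inE => /existsP[j /eqP ->]; rewrite lt0n; apply/negP => /eqP H.
have : N %| s * a ^ j by rewrite /dvdn H.
rewrite Gauss_dvdl; last by apply: coprimeXr; rewrite coprime_sym coprime_aN.
by move/dvdn_leq => /(_ s0); rewrite leqNgt sN.
Qed.

Lemma coset_sub {s} {x : 'I_N} : x \in cyc_coset a N s -> cyc_coset a N x \subset cyc_coset a N s.
Proof.
rewrite inE => /existsP[j /eqP Hx]; apply/subsetP => y; rewrite inE => /existsP[k /eqP Hy].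
rewrite coset_eq; apply/imsetP; exists (Ordinal (ltn_pmod (j + k) h_gt0)) => //.
apply: val_inj; rewrite /= Hy Hx modnMml -mulnA -expnD; exact: per.
Qed.


Lemma coset_nzs (s : 'I_N) : 0 < val s -> 0 < val s < N.
Proof. by move=> ->; rewrite ltn_ord. Qed.

Lemma num_cosetsE : N = num_cosets a N * h + 1.
Proof.
rewrite /num_cosets.
set P := [set cyc_coset a N (val s) | s : 'I_N & 0 < val s].
set D := [set x : 'I_N | 0 < val x].
have cardP : forall A, A \in P -> #|A| = h.
  by move=> A /imsetP[s]; rewrite inE => /coset_nzs Hs ->; apply: coset_card.
have part : partition P D.
  apply/and3P; split.
  - apply/eqP/setP => x; apply/bigcupP/idP.
    + case=> B /imsetP[s]; rewrite inE => /coset_nzs Hs -> Hx.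
      by rewrite inE; apply: coset_nz Hx.
    + rewrite inE => Hx; exists (cyc_coset a N x); last exact: coset_self.
      by apply/imsetP; exists x; rewrite ?inE.
  - apply/trivIsetP => A B /imsetP[s]; rewrite inE => /coset_nzs Hs ->.
    move=> /imsetP[t]; rewrite inE => /coset_nzs Ht -> neq.
    case: (set_0Vmem (cyc_coset a N s :&: cyc_coset a N t)) => [E|[x]].
      by rewrite -setI_eq0 E.
    rewrite inE => /andP[xs xt].
    have Hx : 0 < val x < N by rewrite (coset_nz Hs xs) ltn_ord.
    have eqx : forall u, 0 < u < N -> x \in cyc_coset a N u -> cyc_coset a N x = cyc_coset a N u.
      move=> u Hu xu; apply/eqP; rewrite eqEcard coset_sub //= coset_card // coset_card //.
    by move: neq; rewrite -(eqx _ Hs xs) -(eqx _ Ht xt) eqxx.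
  - apply/imsetP => [[s]]; rewrite inE => /coset_nzs Hs E.
    by move: (coset_self s); rewrite -E inE.
have := card_partition part.
rewrite (eq_bigr (fun _ => h)) ?sum_nat_const; last by move=> A; apply: cardP.
have -> : D = [set~ Ordinal N_gt0].
  by apply/setP => x; rewrite !inE -val_eqE /= lt0n.
rewrite cardsC1 card_ord => <-; rewrite [RHS]addn1 prednK //; exact: N_gt0.
Qed.

Lemma mult_orderE : mult_order a N = h.
Proof.
rewrite /mult_order.
have HN : h.-1 + (N - h).+1 = N.
  by rewrite addnS -addSn prednK ?h_gt0 // subnKC // h_le_N.
rewrite -[in iota 1 _]HN iotaD filter_cat.
have -> : [seq k <- iota 1 h.-1 | a ^ k == 1 %[mod N]] = [::].
  rewrite -(filter_pred0 (iota 1 h.-1)); apply: eq_in_filter => k.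
  rewrite mem_iota add1n prednK ?h_gt0 // => Hk /=.
  by apply/negP => /eqP Hk1; apply: (@no_smallN k Hk).
by rewrite add1n prednK ?h_gt0 //= aH eqxx.
Qed.

End Main.

Theorem theorem5 (a n : nat) (ha : 2 <= a) (heven : ~~ odd a) (hn : 1 <= n) :
  primover a (a ^ (2 ^ n.-1) + 1).
Proof.
have h1 : 1 < a ^ (2 ^ n.-1) + 1 by apply: N_gt1.
have ho : odd (a ^ (2 ^ n.-1) + 1) by apply: N_odd.
have hc : coprime a (a ^ (2 ^ n.-1) + 1) by apply: coprime_aN.
have hm : mult_order a (a ^ (2 ^ n.-1) + 1) = 2 ^ n by apply: mult_orderE.
have he : a ^ (2 ^ n.-1) + 1 = num_cosets a (a ^ (2 ^ n.-1) + 1) * 2 ^ n + 1.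
  exact: num_cosetsE.
rewrite /primover h1 /=.
case: (boolP (prime _)) => //= np.
by rewrite /overpseudoprime ho h1 np hc hm -he eqxx.
Qed.
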